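(* Let $f=Fe_3F^*:D\to S^3_1$ be a CMC $1$ face with Weierstrass data $(g,\omega=h\,dz)$ and holomorphic null lift $F$, let $\varphi=dg/(g^2\omega)$, and let $p$ be a non-degenerate singular point. Then, with $\xi=\sqrt{-1}\,\overline{(g_z/g)}\,\partial_z-\sqrt{-1}\,(g_z/g)\,\partial_{\bar z}$, $$\xi f(p)=2|h(p)|^2\operatorname{Im}\varphi(p)\;F(p)\begin{pmatrix}1&g(p)\\\overline{g(p)}&1\end{pmatrix}F(p)^*.$$
   Context: $S^3_1=\{X\in\mathrm{Herm}(2):\det X=-1\}$. Given a domain $D\subset\mathbb{C}$, meromorphic $g$ and holomorphic $\omega=h\,dz$ with $(1+|g|^2)^2|\omega|^2$ Riemannian and $1-|g|^2\not\equiv0$, $F:D\to SL(2,\mathbb{C})$ is holomorphic with $F^{-1}dF=\begin{pmatrix}g&-g^2\\1&-g\end{pmatrix}\omega$, and $f=Fe_3F^*$, $e_3=\mathrm{diag}(1,-1)$, $F^*=\bar F^T$. Singular points are those with $|g|=1$; non-degenerate means additionally $dg(p)\ne0$. $\xi f$ denotes the directional derivative of the matrix-valued map $f$ along $\xi$. *)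

(* Defs.v *)
(* Coquelicot complex numbers C, complex derivative via is_derive
   with K = C_AbsRing, real derivative with K = R_AbsRing. *)
From Stdlib Require Import Reals.
From Coquelicot Require Export Coquelicot.
Open Scope R_scope.

Record M2 := mkM2 { m11 : C; m12 : C; m21 : C; m22 : C }.

Definition M2mul (A B : M2) : M2 :=
  mkM2 (m11 A * m11 B + m12 A * m21 B)%C (m11 A * m12 B + m12 A * m22 B)%C
       (m21 A * m11 B + m22 A * m21 B)%C (m21 A * m12 B + m22 A * m22 B)%C.

Definition M2scale (c : C) (A : M2) : M2 :=
  mkM2 (c * m11 A)%C (c * m12 A)%C (c * m21 A)%C (c * m22 A)%C.

Definition M2adj (A : M2) : M2 :=
  mkM2 (Cconj (m11 A)) (Cconj (m21 A)) (Cconj (m12 A)) (Cconj (m22 A)).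

Definition M2det (A : M2) : C := (m11 A * m22 A - m12 A * m21 A)%C.

Definition e3 : M2 := mkM2 1%C 0%C 0%C (-1)%C.

Definition is_cderivM (F : C -> M2) (z : C) (L : M2) : Prop :=
  is_derive (fun w : C => m11 (F w)) z (m11 L) /\
  is_derive (fun w : C => m12 (F w)) z (m12 L) /\
  is_derive (fun w : C => m21 (F w)) z (m21 L) /\
  is_derive (fun w : C => m22 (F w)) z (m22 L).

Definition holo_on (U : C -> Prop) (f : C -> C) : Prop :=
  forall z, U z -> ex_derive f z.

(* directional derivative xi f(p) of a matrix-valued map f along the real
   direction vector v in C = R^2:  d/dt|_{t=0} f(p + t v), entrywise *)
Definition is_dir_derivM (f : C -> M2) (p v : C) (L : M2) : Prop :=
  is_derive (fun t : R => m11 (f (p + RtoC t * v)%C)) 0 (m11 L) /\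
  is_derive (fun t : R => m12 (f (p + RtoC t * v)%C)) 0 (m12 L) /\
  is_derive (fun t : R => m21 (f (p + RtoC t * v)%C)) 0 (m21 L) /\
  is_derive (fun t : R => m22 (f (p + RtoC t * v)%C)) 0 (m22 L).

Definition connectedC (D : C -> Prop) : Prop :=
  ~ exists U V : C -> Prop, open U /\ open V /\
      (forall z, D z -> U z \/ V z) /\
      (exists z, D z /\ U z) /\ (exists z, D z /\ V z) /\
      (forall z, D z -> U z -> V z -> False).

Definition domainC (D : C -> Prop) : Prop :=
  open D /\ connectedC D /\ exists z, D z.

Definition meromorphic_on (D P : C -> Prop) (g dg : C -> C) : Prop :=
  (forall z, P z -> D z) /\
  (forall a, D a -> exists eps : posreal,
      forall z, ball a eps z -> P z -> z = a) /\
  (forall z, D z -> ~ P z -> is_derive g z (dg z)) /\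
  (forall a, P a -> exists (n : nat) (r : posreal) (u : C -> C),
      (1 <= n)%nat /\ holo_on (ball a r) u /\ u a <> 0%C /\
      forall z, ball a r z -> z <> a -> g z = (u z / (z - a) ^ n)%C).

(* Main.v *)
Require Import Defs.
From Stdlib Require Import Reals Lra.
From Coquelicot Require Import Coquelicot.
Open Scope R_scope.

Lemma normCR (w:C) : @norm R_AbsRing C_R_NormedModule w = Cmod w.
Proof.
  unfold norm; simpl. unfold prod_norm, Cmod; simpl.
  change (@norm R_AbsRing R_NormedModule) with Rabs.
  rewrite !Rmult_1_r. rewrite <- !Rabs_mult. rewrite !Rabs_right; try reflexivity;
  apply Rle_ge; apply Rle_0_sqr.
Qed.
Lemma normCC (w:C) : @norm C_AbsRing C_NormedModule w = Cmod w.
Proof. reflexivity. Qed.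

Lemma scalCR (r:R) (w:C) : @scal R_Ring C_R_ModuleSpace r w = (RtoC r * w)%C.
Proof. destruct w; unfold scal; simpl. unfold prod_scal, scal; simpl; unfold mult; simpl.
 unfold Cmult, RtoC; simpl. f_equal; ring. Qed.
Lemma minusC (a b : C) : @minus C_AbelianGroup a b = (a - b)%C.
Proof. reflexivity. Qed.
Lemma minusCR (a b : C) : @minus (ModuleSpace.AbelianGroup _ C_R_ModuleSpace) a b = (a - b)%C.
Proof. reflexivity. Qed.

Lemma chain (f: C->C) z l v : @is_derive C_AbsRing C_NormedModule f z l ->
  @is_derive R_AbsRing C_R_NormedModule (fun t:R => f (z + RtoC t * v)%C) 0 (v*l)%C.
Proof.
  intros [_ H].
  split. apply is_linear_scal_l.
  intros x Hx. apply (@is_filter_lim_locally_unique R_AbsRing (AbsRing_NormedModule R_AbsRing)) in Hx. subst x.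
  specialize (H z (fun P HP => HP)).
  intros eps.
  assert (Hv : 0 < Cmod v + 1) by (pose proof (Cmod_ge_0 v); lra).
  assert (Hl : filterlim (fun t:R => (z + RtoC t * v)%C) (locally 0) (locally z)).
  { apply (proj2 (@filterlim_locally R (AbsRing_UniformSpace C_AbsRing) (locally (0:R)) _ (fun t:R => (z + RtoC t * v)%C) z)). intros e.
    assert (He : 0 < e / (Cmod v + 1)) by (apply Rdiv_lt_0_compat; [apply cond_pos|lra]).
    exists (mkposreal _ He). intros t Ht.
    change (Cmod ((z + t * v) - z)%C < e).
    replace ((z + t * v) - z)%C with (RtoC t * v)%C by ring.
    rewrite Cmod_mult, Cmod_R.
    change (Rabs (t - 0) < e / (Cmod v + 1)) in Ht. rewrite Rminus_0_r in Ht.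
    pose proof (Cmod_ge_0 v). pose proof (cond_pos e).
    apply Rle_lt_trans with (Rabs t * (Cmod v + 1)). apply Rmult_le_compat_l; [apply Rabs_pos|lra].
    apply Rmult_lt_reg_r with (/ (Cmod v + 1)). apply Rinv_0_lt_compat; lra.
    rewrite Rmult_assoc, Rinv_r by lra. rewrite Rmult_1_r. exact Ht. }
  pose proof (domin_comp _ _ _ _ _ Hl H) as H2.
  specialize (H2 (mkposreal (eps / (Cmod v + 1)) (Rdiv_lt_0_compat _ _ (cond_pos eps) Hv))).
  revert H2; apply filter_imp. intros t Ht. simpl in Ht.
  rewrite normCR. rewrite !normCC in Ht. rewrite !minusC in Ht.
  change (@norm R_AbsRing R_NormedModule (minus t 0)) with (Rabs (t - 0)).
  rewrite scalCR. rewrite !minusCR.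
  assert (E1 : (z + RtoC 0 * v = z)%C) by (apply injective_projections; simpl; ring).
  rewrite E1.
  change (Cmod ((f (z + t*v) - f z) - (z + t*v - z) * l) <= eps/(Cmod v+1) * Cmod (z+t*v - z))%C in Ht.
  change (Cmod ((f (z + t*v) - f z) - RtoC (t - 0) * (v * l)) <= eps * Rabs (t - 0))%C.
  rewrite Rminus_0_r.
  replace ((z + t * v) - z)%C with (RtoC t * v)%C in Ht by ring.
  replace (RtoC t * (v * l))%C with ((RtoC t * v) * l)%C by ring.
  eapply Rle_trans. apply Ht.
  rewrite Cmod_mult, Cmod_R.
  pose proof (Cmod_ge_0 v). pose proof (Rabs_pos t). pose proof (cond_pos eps).
  unfold Rdiv. 
  replace (eps * / (Cmod v + 1) * (Rabs t * Cmod v)) with (eps * Rabs t * (Cmod v / (Cmod v + 1))) by (field; lra).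
  rewrite <- (Rmult_1_r (eps * Rabs t)) at 2.
  apply Rmult_le_compat_l. apply Rmult_le_pos; lra.
  apply Rmult_le_reg_r with (Cmod v + 1); [lra|]. unfold Rdiv. rewrite Rmult_assoc, Rinv_l; lra.
Qed.

Lemma comp_fst (u:R->C) x l: @is_derive R_AbsRing C_R_NormedModule u x l ->
  is_derive (fun t => fst (u t)) x (fst l).
Proof.
  intro H. unfold is_derive in *.
  apply filterdiff_ext_lin with (fun y => fst (@scal R_Ring C_R_ModuleSpace y l)).
  apply (@filterdiff_comp R_AbsRing R_NormedModule C_R_NormedModule R_NormedModule _ _ u (fun p : C_R_NormedModule => fst p)).
  exact H. apply filterdiff_linear. apply (@is_linear_fst R_AbsRing R_NormedModule R_NormedModule).
  intro y; reflexivity.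
Qed.
Lemma comp_snd (u:R->C) x l: @is_derive R_AbsRing C_R_NormedModule u x l ->
  is_derive (fun t => snd (u t)) x (snd l).
Proof.
  intro H. unfold is_derive in *.
  apply filterdiff_ext_lin with (fun y => snd (@scal R_Ring C_R_ModuleSpace y l)).
  apply (@filterdiff_comp R_AbsRing R_NormedModule C_R_NormedModule R_NormedModule _ _ u (fun p : C_R_NormedModule => snd p)).
  exact H. apply filterdiff_linear. apply (@is_linear_snd R_AbsRing R_NormedModule R_NormedModule).
  intro y; reflexivity.
Qed.
Lemma comp_pair (u:R->C) x a b:
  is_derive (fun t => fst (u t)) x a -> is_derive (fun t => snd (u t)) x b ->
  @is_derive R_AbsRing C_R_NormedModule u x (a, b).
Proof.
  intros Ha Hb. unfold is_derive in *.
  apply filterdiff_ext with (fun y => (fst (u y), snd (u y))).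
  { intro y; destruct (u y); reflexivity. }
  apply filterdiff_ext_lin with (fun y => (@scal R_Ring R_ModuleSpace y a, @scal R_Ring R_ModuleSpace y b)).
  2:{ intro y; reflexivity. }
  apply (@filterdiff_comp'_2 R_AbsRing R_NormedModule R_NormedModule R_NormedModule C_R_NormedModule
    (fun t => fst (u t)) (fun t => snd (u t)) (fun a b => (a,b)) x _ _ (fun a b => (a,b)) Ha Hb).
  apply filterdiff_ext with (fun t : prod_NormedModule R_AbsRing R_NormedModule R_NormedModule => t).
  { intros [? ?]; reflexivity. }
  apply filterdiff_ext_lin with (fun t : prod_NormedModule R_AbsRing R_NormedModule R_NormedModule => t).
  apply filterdiff_id. intros [? ?]; reflexivity.
Qed.

Notation isdC := (@is_derive R_AbsRing C_R_NormedModule).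

Lemma comp_pair' (u:R->C) x l:
  is_derive (fun t => fst (u t)) x (fst l) -> is_derive (fun t => snd (u t)) x (snd l) -> isdC u x l.
Proof. intros; destruct l; apply comp_pair; auto. Qed.

Lemma isdR_eq (f:R->R) x l1 l2 : is_derive f x l1 -> l1 = l2 -> is_derive f x l2.
Proof. intros H ->; exact H. Qed.

Lemma dmult u w x du dw : isdC u x du -> isdC w x dw ->
  isdC (fun t => u t * w t)%C x (du * w x + u x * dw)%C.
Proof.
  intros Hu Hw. pose proof (comp_fst _ _ _ Hu). pose proof (comp_snd _ _ _ Hu).
  pose proof (comp_fst _ _ _ Hw). pose proof (comp_snd _ _ _ Hw).
  apply comp_pair'.
  - apply is_derive_ext with (fun t => fst (u t) * fst (w t) - snd (u t) * snd (w t)).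
    { intro t. destruct (u t), (w t); reflexivity. }
    eapply isdR_eq. apply @is_derive_minus; apply @is_derive_mult; try eassumption; intros; apply Rmult_comm.
    destruct du, dw, (u x), (w x); simpl. unfold minus, plus, opp, mult; simpl. ring.
  - apply is_derive_ext with (fun t => fst (u t) * snd (w t) + snd (u t) * fst (w t)).
    { intro t. destruct (u t), (w t); reflexivity. }
    eapply isdR_eq. apply @is_derive_plus; apply @is_derive_mult; try eassumption; intros; apply Rmult_comm.
    destruct du, dw, (u x), (w x); simpl. unfold minus, plus, opp, mult; simpl. ring.
Qed.

Lemma dconj u x du : isdC u x du -> isdC (fun t => Cconj (u t)) x (Cconj du).
Proof.
  intros Hu. pose proof (comp_fst _ _ _ Hu). pose proof (comp_snd _ _ _ Hu).
  apply comp_pair'.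
  - apply is_derive_ext with (fun t => fst (u t)). { intro t. destruct (u t); reflexivity. }
    destruct du; exact H.
  - apply is_derive_ext with (fun t => - snd (u t)). { intro t. destruct (u t); reflexivity. }
    destruct du; simpl. apply @is_derive_opp in H0. exact H0.
Qed.

Lemma dminus u w x du dw : isdC u x du -> isdC w x dw ->
  isdC (fun t => u t - w t)%C x (du - dw)%C.
Proof.
  intros Hu Hw. pose proof (comp_fst _ _ _ Hu). pose proof (comp_snd _ _ _ Hu).
  pose proof (comp_fst _ _ _ Hw). pose proof (comp_snd _ _ _ Hw).
  apply comp_pair'.
  - apply is_derive_ext with (fun t => fst (u t) - fst (w t)).
    { intro t. destruct (u t), (w t); reflexivity. }
    eapply isdR_eq. apply @is_derive_minus; eassumption.
    destruct du, dw; simpl. unfold minus, plus, opp; simpl. ring.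
  - apply is_derive_ext with (fun t => snd (u t) - snd (w t)).
    { intro t. destruct (u t), (w t); reflexivity. }
    eapply isdR_eq. apply @is_derive_minus; eassumption.
    destruct du, dw; simpl. unfold minus, plus, opp; simpl. ring.
Qed.
Lemma dplus u w x du dw : isdC u x du -> isdC w x dw ->
  isdC (fun t => u t + w t)%C x (du + dw)%C.
Proof.
  intros Hu Hw. pose proof (comp_fst _ _ _ Hu). pose proof (comp_snd _ _ _ Hu).
  pose proof (comp_fst _ _ _ Hw). pose proof (comp_snd _ _ _ Hw).
  apply comp_pair'.
  - apply is_derive_ext with (fun t => fst (u t) + fst (w t)).
    { intro t. destruct (u t), (w t); reflexivity. }
    eapply isdR_eq. apply @is_derive_plus; eassumption.
    destruct du, dw; simpl. unfold plus; simpl. ring.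
  - apply is_derive_ext with (fun t => snd (u t) + snd (w t)).
    { intro t. destruct (u t), (w t); reflexivity. }
    eapply isdR_eq. apply @is_derive_plus; eassumption.
    destruct du, dw; simpl. unfold plus; simpl. ring.
Qed.

Lemma isdC_eq (f:R->C) x (l1 l2 : C) : isdC f x l1 -> @eq C l1 l2 -> isdC f x l2.
Proof. intros H ->; exact H. Qed.
Lemma dconst (c:C) x : isdC (fun _ => c) x (RtoC 0).
Proof. apply comp_pair'; simpl; (eapply isdR_eq; [apply is_derive_const | reflexivity]). Qed.
Lemma Cconj_R (r:R) : Cconj (RtoC r) = RtoC r.
Proof. apply injective_projections; simpl; ring. Qed.
Lemma Cconj_i : Cconj Ci = (- Ci)%C.
Proof. apply injective_projections; simpl; ring. Qed.

Ltac build G1 G2 G3 G4 := lazymatch goal with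
  | |- isdC (fun _ => ?c) _ _ => apply dconst
  | |- isdC (fun t => Cplus _ _) _ _ => apply dplus; [build G1 G2 G3 G4|build G1 G2 G3 G4]
  | |- isdC (fun t => Cmult _ _) _ _ => apply dmult; [build G1 G2 G3 G4|build G1 G2 G3 G4]
  | |- isdC (fun t => Cconj _) _ _ => apply dconj; build G1 G2 G3 G4
  | |- isdC (fun t => m11 _) _ _ => apply G1
  | |- isdC (fun t => m12 _) _ _ => apply G2
  | |- isdC (fun t => m21 _) _ _ => apply G3
  | |- isdC (fun t => m22 _) _ _ => apply G4
  end.

Lemma E0 (p xi : C) : (p + RtoC 0 * xi = p)%C.
Proof. apply injective_projections; simpl; ring. Qed.

From Stdlib Require Import Classical.
Lemma Ci2 : (Ci ^ 2 = - 1)%C.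
Proof. apply injective_projections; simpl; ring. Qed.
Lemma Ci3 : (Ci ^ 3 = - Ci)%C.
Proof. apply injective_projections; simpl; ring. Qed.
Lemma Ci4 : (Ci ^ 4 = 1)%C.
Proof. apply injective_projections; simpl; ring. Qed.
Ltac pushc := repeat (first [rewrite Cplus_conj | rewrite Cmult_conj | rewrite Copp_conj | rewrite Cminus_conj | rewrite Cconj_conj | rewrite Cconj_R | rewrite Cconj_i]).

Theorem lemma4p9
  (D P : C -> Prop) (g dg h : C -> C) (F : C -> M2) (p : C)
  (HD : domainC D)
  (Hg : meromorphic_on D P g dg)
  (Hh : holo_on D h)
  (Hmetric : exists rho : C -> R,
      (forall z, D z -> continuous rho z /\ 0 < rho z) /\
      (forall z, D z -> ~ P z ->
         rho z = (1 + Cmod (g z) ^ 2) ^ 2 * Cmod (h z) ^ 2))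
  (Hnondeg : exists z, D z /\ ~ P z /\ Cmod (g z) <> 1)
  (HFhol : forall z, D z -> exists L, is_cderivM F z L)
  (HFdet : forall z, D z -> M2det (F z) = 1%C)
  (HFode : forall z, D z -> ~ P z ->
      is_cderivM F z
        (M2mul (F z) (M2scale (h z)
           (mkM2 (g z) (- (g z * g z))%C 1%C (- g z)%C))))
  (Hp : D p) (HpP : ~ P p) (Hsing : Cmod (g p) = 1) (Hdg : dg p <> 0%C) :
  let f := fun z => M2mul (F z) (M2mul e3 (M2adj (F z))) in
  let phi := (dg p / (g p * g p * h p))%C in
  let xi := (Ci * Cconj (dg p / g p))%C in
  is_dir_derivM f p xi
    (M2scale (RtoC (2 * Cmod (h p) ^ 2 * Im phi))
       (M2mul (F p) (M2mul (mkM2 1%C (g p) (Cconj (g p)) 1%C) (M2adj (F p))))).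
Proof.
  intros f phi xi.
  destruct (HFode p Hp HpP) as [H1 [H2 [H3 H4]]].
  pose proof (chain _ _ _ xi H1) as G1.
  pose proof (chain _ _ _ xi H2) as G2.
  pose proof (chain _ _ _ xi H3) as G3.
  pose proof (chain _ _ _ xi H4) as G4.
  clear H1 H2 H3 H4.
  unfold is_dir_derivM, f; cbn [m11 m12 m21 m22 M2mul M2scale M2adj e3].
  assert (Hg0 : g p <> 0%C).
  { intro E. rewrite E, Cmod_0 in Hsing. lra. }
  assert (Hgg : Cconj (g p) = (/ g p)%C).
  { pose proof (Cmod2_conj (g p)) as E. rewrite Hsing in E.
    replace (RtoC (1 ^ 2)) with (RtoC 1) in E by (f_equal; ring).
    transitivity ((g p * Cconj (g p)) * / g p)%C. field. exact Hg0. rewrite <- E. ring. }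
  split; [|split; [|split]]; (eapply isdC_eq; [ build G1 G2 G3 G4 | ]).
  all: clear G1 G2 G3 G4.
  all: cbv beta; rewrite ?E0.
  all: cbn [m11 m12 m21 m22 M2mul M2scale M2adj e3].
  all: unfold xi, phi.
  all: destruct (classic (h p = 0%C)) as [Hh0|Hh0]; [ rewrite ?Hh0, ?Cmod_0; replace (2 * 0 ^ 2 * _)%R with 0%R by ring; pushc; unfold Cdiv; ring | ].
  all: assert (Hch : Cconj (h p) <> 0%C) by (intro E; apply Hh0; rewrite <- (Cconj_conj (h p)), E; apply injective_projections; simpl; ring).
  all: assert (Hggh : (g p * g p * h p)%C <> 0%C) by (intro E; apply (f_equal Cmod) in E; rewrite !Cmod_mult, Cmod_0, Hsing in E; apply Hh0; apply Cmod_eq_0; lra).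
  all: assert (Hi : Ci <> 0%C) by (intro E; apply (f_equal snd) in E; simpl in E; lra).
  all: rewrite !RtoC_mult, Cmod2_conj, im_alt.
  all: rewrite ?(Cdiv_conj _ _ Hggh).
  all: pushc.
  all: rewrite ?(Cdiv_conj _ _ Hg0).
  all: rewrite !Hgg.
  all: (field_simplify_eq; [ rewrite ?Ci2, ?Ci3, ?Ci4; ring | repeat split; auto ]).
Qed.
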